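(* There exists a sequence $(G_n)_{n\in\mathbb{N}}$ of graphs such that $|V(G_n)|=n$ for all $n$, $R_2(G_n)=O(n)$ and $R_3(G_n)=\Omega(n\log n)$.
   Context: For a graph $G$ and integer $r\geqslant 2$, the $r$-colour Ramsey number $R_r(G)$ is the smallest integer $N$ such that every colouring of the edges of the complete graph $K_N$ with $r$ colours contains a copy of $G$ all of whose edges have the same colour. *)

(* Defs.v *)
From Stdlib Require Import ClassicalEpsilon.
From mathcomp Require Import all_boot.
Set Implicit Arguments. Unset Strict Implicit. Unset Printing Implicit Defensive.

Definition simple_graph (n : nat) (G : rel 'I_n) : Prop :=
  symmetric G /\ irreflexive G.

(* An r-colouring of the edges of K_N: a colour for every 2-subset {x,y} of
   'I_N (values on sets that are not 2-subsets are irrelevant). *)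
Definition edge_colouring (r N : nat) := {ffun {set 'I_N} -> 'I_r}.

Definition has_mono_copy (n : nat) (G : rel 'I_n) (r N : nat)
    (c : edge_colouring r N) : bool :=
  [exists f : {ffun 'I_n -> 'I_N}, injectiveb f &&
     [exists i : 'I_r, [forall u, forall v, G u v ==> (c [set f u; f v] == i)]]].

Definition ramsey_prop (n : nat) (G : rel 'I_n) (r : nat) (N : nat) : bool :=
  [forall c : edge_colouring r N, has_mono_copy G c].

(* R_r(G): the smallest such N (defined as 0 if no such N exists, which by
   Ramsey's theorem never happens for r >= 1). *)
Definition ramsey_number (r n : nat) (G : rel 'I_n) : nat :=
  match excluded_middle_informative (exists N, ramsey_prop G r N) with
  | left h => ex_minn h
  | right _ => 0
  end.

(* Main.v *)
Require Import Defs.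
From mathcomp Require Import all_boot.
From mathcomp Require Import zify.
From Stdlib Require Import ClassicalEpsilon.
Set Implicit Arguments. Unset Strict Implicit. Unset Printing Implicit Defensive.


Definition mono_set r N (c : edge_colouring r N) (i : 'I_r) (Q : {set 'I_N}) :=
  forall x y, x \in Q -> y \in Q -> x != y -> c [set x; y] = i.

Lemma card_split_col r N (c : edge_colouring r N) (A : {set 'I_N}) v :
  #|A| = \sum_(j < r) #|[set y | (y \in A) && (c [set v; y] == j)]|.
Proof.
rewrite -sum1_card (partition_big (fun y => c [set v; y]) xpredT) //=.
by apply: eq_bigr => j _; rewrite sum1dep_card.
Qed.

Lemma ramsey r N (c : edge_colouring r N) t : forall (a : 'I_r -> nat) (W : {set 'I_N}),
  \sum_i a i <= t -> r.+1 ^ t <= #|W| ->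
  exists i (Q : {set 'I_N}), [/\ Q \subset W, #|Q| = (a i).+1 & mono_set c i Q].
Proof.
elim: t => [|t IH] a W Ha HW.
  have /card_gt0P [v Hv] : 0 < #|W| by rewrite expn0 in HW.
  exists (c [set v]), [set v]; split.
  - by rewrite sub1set.
  - rewrite cards1.
    have : a (c [set v]) <= \sum_i a i by rewrite (bigD1 (c [set v])) //= leq_addr.
    lia.
  - by move=> x y /set1P -> /set1P ->; rewrite eqxx.
have /card_gt0P [v Hv] : 0 < #|W| by apply: leq_trans HW; rewrite expn_gt0.
pose Wj (j : 'I_r) := [set y | (y \in W :\ v) && (c [set v; y] == j)].
have [j Hj] : exists j, r.+1 ^ t <= #|Wj j|.
  have [j Hj|Hall] := pickP (fun j => r.+1 ^ t <= #|Wj j|); first by exists j.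
  exfalso.
  have H1 : #|W :\ v| = \sum_(j < r) #|Wj j| by apply: card_split_col.
  have H2 : \sum_(j < r) #|Wj j| <= \sum_(j < r) (r.+1 ^ t).-1.
    apply: leq_sum => j _; have := Hall j; move/negbT; rewrite -ltnNge.
    have : 0 < r.+1 ^ t by rewrite expn_gt0.
    lia.
  rewrite sum_nat_const card_ord in H2.
  have H3 : #|W| = #|W :\ v| + 1 by rewrite (cardsD1 v W) Hv addnC.
  rewrite expnS in HW.
  have : 0 < r.+1 ^ t by rewrite expn_gt0.
  have rpos : 0 < r by case: (c set0) => m; lia.
  move: H1 H2 H3 HW; move: (r.+1 ^ t) => P; nia.
have HWj : Wj j \subset W.
  by apply/subsetP => y; rewrite inE => /andP [/setD1P [_ ?] _].
have Hvj : forall y, y \in Wj j -> y != v /\ c [set v; y] = j.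
  by move=> y; rewrite !inE => /andP [/andP [? _] /eqP ?].
case Haj: (a j) => [|aj].
  exists j, [set v]; split.
  - by rewrite sub1set.
  - by rewrite cards1 Haj.
  - by move=> x y /set1P -> /set1P ->; rewrite eqxx.
pose a' := fun i => if i == j then aj else a i.
have Ha' : \sum_i a' i <= t.
  have E1 : \sum_i a i = a j + \sum_(i | i != j) a i by rewrite (bigD1 j).
  have E2 : \sum_i a' i = a' j + \sum_(i | i != j) a' i by rewrite (bigD1 j).
  have E3 : \sum_(i < r | i != j) a' i = \sum_(i < r | i != j) a i.
    by apply: eq_bigr => i /negbTE Hi; rewrite /a' Hi.
  rewrite E2 E3 /a' eqxx; rewrite E1 Haj in Ha. move: Ha; set S := (\sum_(i < r | i != j) a i); lia.
have [i [Q [HQ HQc HQm]]] := IH a' (Wj j) Ha' Hj.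
case: (eqVneq i j) => [Eij | Nij].
- subst i; exists j, (v |: Q); split.
  + by rewrite subUset sub1set Hv (subset_trans HQ HWj).
  + rewrite cardsU1 HQc /a' eqxx Haj.
    have -> : v \notin Q.
      by apply/negP => /(subsetP HQ) /Hvj [/negP].
    by [].
  + move=> x y /setU1P [-> | Hx] /setU1P [-> | Hy]; rewrite ?eqxx //.
    * by move=> _; have [_ ->] := Hvj y (subsetP HQ y Hy).
    * by move=> _; rewrite setUC; have [_ ->] := Hvj x (subsetP HQ x Hx).
    * by apply: HQm.
- exists i, Q; split.
  + exact: subset_trans HQ HWj.
  + by rewrite HQc /a' (negbTE Nij).
  + exact: HQm.
Qed.

Definition kk n := (trunc_log 9 n).+1.
Definition dd n := n %/ (2 * kk n).
Definition Grel n : rel 'I_n := fun u v =>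
  (u != v) && [|| (u < kk n) && (v < kk n),
     (u == kk n :> nat) && (kk n < v <= kk n + dd n)
   | (v == kk n :> nat) && (kk n < u <= kk n + dd n)].

Lemma Grel_simple n : simple_graph (@Grel n).
Proof.
split.
- move=> u v; rewrite /Grel eq_sym; congr (_ && _).
  rewrite [X in X || _]andbC; case: (_ && _) => //=; exact: orbC.
- by move=> u; rewrite /Grel eqxx.
Qed.

Lemma mono_from_seq n (G : rel 'I_n) r N (c : edge_colouring r N) (s : seq 'I_N) x0 i :
  uniq s -> n <= size s ->
  (forall u v : 'I_n, G u v -> c [set nth x0 s u; nth x0 s v] = i) ->
  has_mono_copy G c.
Proof.
move=> Us Hn HG; apply/existsP; exists [ffun u : 'I_n => nth x0 s u]; apply/andP; split.
  apply/injectiveP => u v; rewrite !ffunE => /eqP; rewrite nth_uniq //.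
  - by move/eqP/val_inj.
  - exact: leq_trans (ltn_ord u) Hn.
  - exact: leq_trans (ltn_ord v) Hn.
apply/existsP; exists i; apply/forallP => u; apply/forallP => v; apply/implyP => H.
by rewrite !ffunE HG.
Qed.

Lemma extend N (P : seq 'I_N) : uniq P -> exists F, uniq (P ++ F) /\ size (P ++ F) = N.
Proof.
move=> UP; exists [seq x <- enum 'I_N | x \notin P].
have U : uniq (P ++ [seq x <- enum 'I_N | x \notin P]).
  rewrite cat_uniq UP filter_uniq ?enum_uniq // andbT.
  by apply/hasPn => x; rewrite mem_filter => /andP [].
split => //.
rewrite -[X in _ = X](size_enum_ord N); apply: perm_size; apply: uniq_perm => //.
  exact: enum_uniq.
move=> x; rewrite mem_cat mem_filter mem_enum /=.
by case: (x \in P).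
Qed.

Lemma embed n r N (c : edge_colouring r N) i (Qs Ls : seq 'I_N) v0 :
  size Qs = kk n -> size Ls = dd n -> uniq (Qs ++ v0 :: Ls) -> n <= N ->
  (forall x y, x \in Qs -> y \in Qs -> x != y -> c [set x; y] = i) ->
  (forall y, y \in Ls -> c [set v0; y] = i) -> has_mono_copy (@Grel n) c.
Proof.
move=> HQ HL U HN HQc HLc.
have [F [UF SF]] := extend U.
have UQ : uniq Qs by move: U; rewrite cat_uniq => /and3P [].
have SP : size (Qs ++ v0 :: Ls) = kk n + dd n + 1 by rewrite size_cat /= HQ HL; lia.
have N1 : forall u, u < kk n -> nth v0 ((Qs ++ v0 :: Ls) ++ F) u = nth v0 Qs u.
  by move=> u Hu; rewrite nth_cat SP ifT; [rewrite nth_cat HQ Hu | lia].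
have N2 : nth v0 ((Qs ++ v0 :: Ls) ++ F) (kk n) = v0.
  by rewrite nth_cat SP ifT; [rewrite nth_cat HQ ltnn subnn | lia].
have N3 : forall u, kk n < u <= kk n + dd n -> nth v0 ((Qs ++ v0 :: Ls) ++ F) u \in Ls.
  move=> u Hu; rewrite nth_cat SP ifT; last by lia.
  rewrite nth_cat HQ ifF; last by lia.
  have -> : u - kk n = (u - kk n).-1.+1 by lia.
  by rewrite /= mem_nth // HL; lia.
apply: (mono_from_seq (x0 := v0) (i := i) UF); first by rewrite SF.
move=> u v /andP [Huv /or3P [/andP [Hu Hv] | /andP [/eqP Hu Hv] | /andP [/eqP Hv Hu]]].
- rewrite !N1 //; apply: HQc; rewrite ?mem_nth ?HQ //.
  by rewrite nth_uniq ?HQ.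
- by rewrite Hu N2 HLc // N3.
- by rewrite Hv N2 setUC HLc // N3.
Qed.

Lemma split_card r N (c : edge_colouring r N) i (S : {set 'I_N}) v d :
  v \in S -> #|[set y in S | (y != v) && (c [set v; y] == i)]| < d ->
  #|S| <= #|[set y in S | (y != v) && (c [set v; y] != i)]| + d.
Proof.
move=> Hv Hd.
pose S' := [set y in S | (y != v) && (c [set v; y] != i)]; pose Nb := [set y in S | (y != v) && (c [set v; y] == i)].
rewrite -(cardsID S' S).
have H1 : #|S :&: S'| <= #|S'| by apply: subset_leq_card; apply: subsetIr.
have H2 : S :\: S' \subset v |: Nb.
  apply/subsetP => y; rewrite !inE => /andP [Hy1 Hy2].
  case: (eqVneq y v) => //= Hyv; rewrite Hy2 /=.
  by move: Hy1; rewrite Hy2 /= Hyv /= negbK.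
have H3 := subset_leq_card H2; rewrite cardsU1 in H3.
have : (v \notin Nb) <= 1 by case: (v \notin Nb).
rewrite -/S' -/Nb in Hd *. lia.
Qed.

Lemma greedy r N (c : edge_colouring r N) i d m : forall (S : {set 'I_N}),
  (forall v, v \in S -> #|[set y in S | (y != v) && (c [set v; y] == i)]| < d) ->
  m * d < #|S| ->
  exists Qs : seq 'I_N, [/\ size Qs = m.+1, uniq Qs, {subset Qs <= S} &
    forall x y, x \in Qs -> y \in Qs -> x != y -> c [set x; y] != i].
Proof.
elim: m => [|m IH] S HS Hc.
  have /card_gt0P [v Hv] : 0 < #|S| by lia.
  exists [:: v]; split => //.
  - by move=> x; rewrite inE => /eqP ->.
  - by move=> x y; rewrite !inE => /eqP -> /eqP ->; rewrite eqxx.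
have /card_gt0P [v Hv] : 0 < #|S| by lia.
set S' := [set y in S | (y != v) && (c [set v; y] != i)].
have Hs := split_card Hv (HS v Hv).
have HS' : forall w, w \in S' -> #|[set y in S' | (y != w) && (c [set w; y] == i)]| < d.
  move=> w Hw; apply: leq_ltn_trans (HS w _); last by move: Hw; rewrite inE => /andP [].
  apply: subset_leq_card; apply/subsetP => y; rewrite !inE => /andP [/andP [-> _] ->].
  by [].
have [Qs [Hsz HU Hsub Hcl]] := IH S' HS' ltac:(rewrite -/S' in Hs; lia).
exists (v :: Qs); split => //=.
- by rewrite Hsz.
- by rewrite HU andbT; apply/negP => /Hsub; rewrite /S' inE eqxx /= andbF.
- by move=> x; rewrite in_cons => /orP [/eqP -> // | /Hsub]; rewrite /S' inE => /andP [].
- have Hv' : forall y, y \in Qs -> c [set v; y] != i.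
    by move=> y /Hsub; rewrite /S' inE => /and3P [].
  move=> x y; rewrite !in_cons => /orP [/eqP -> | Hx] /orP [/eqP -> | Hy];
    rewrite ?eqxx // => Hxy.
  all: try (by apply: Hv'); try (by rewrite setUC; apply: Hv'); try (by apply: Hcl).
Qed.

Lemma I2 (i x y : 'I_2) : x != i -> y != i -> x = y.
Proof.
case: i x y => [i Hi] [x Hx] [y Hy] /= H1 H2; apply/val_inj => /=.
have : (x != i) /\ (y != i) by split.
lia.
Qed.

Definition oth (i : 'I_2) : 'I_2 :=
  if val i == 0 then @Ordinal 2 1 isT else @Ordinal 2 0 isT.

Lemma oth_neq i : oth i != i.
Proof. by case: i => [[|[|i]] Hi] //. Qed.

Lemma upper n : 0 < n -> ramsey_prop (@Grel n) 2 (3 * n).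
Proof.
move=> n0; apply/forallP => c.
set k := kk n; set d := dd n.
have Hk : 9 ^ k.-1 <= n by rewrite /k /kk /=; apply: trunc_logP.
have Hkd : d * (2 * k) <= n by rewrite /d leq_divM.
have Hkn : k.-1 < n.
  apply: leq_trans Hk; exact: ltn_expl.
have Hsum : \sum_(i < 2) k.-1 = 2 * k.-1 by rewrite sum_nat_const card_ord.
have HR : 3 ^ (\sum_(i < 2) k.-1) <= #|[set: 'I_(3 * n)]|.
  rewrite cardsT card_ord Hsum expnM.
  apply: leq_trans Hk _; lia.
have [i [Q [_ HQc HQm]]] := @ramsey 2 (3 * n) c _ (fun _ => k.-1) setT (leqnn _) HR.
set W := ~: Q.
have HW : #|W| = 3 * n - k by rewrite cardsCs setCK card_ord HQc /k /kk.
have HQs : size (enum Q) = k by rewrite -cardE HQc /k /kk.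
case: (pickP (fun v => (v \in W) &&
     (d <= #|[set y in W | (y != v) && (c [set v; y] == i)]|))) => [v0 /andP [Hv0 Hd] | Hnone].
- set Nb := [set y in W | (y != v0) && (c [set v0; y] == i)] in Hd.
  have HLs : size (take d (enum Nb)) = d by rewrite size_takel // -cardE.
  apply: (embed (i := i) (v0 := v0) HQs HLs) => //.
  + rewrite cat_uniq enum_uniq /= take_uniq ?enum_uniq // andbT.
    apply/andP; split.
    * rewrite negb_or; apply/andP; split.
      - by rewrite mem_enum; move: Hv0; rewrite inE.
      - apply/hasPn => y /mem_take; rewrite mem_enum inE => /andP [Hy _].
        by rewrite mem_enum; move: Hy; rewrite inE.
    * by apply/negP => /mem_take; rewrite mem_enum inE eqxx /= andbF.
  + lia.
  + by move=> x y; rewrite !mem_enum; apply: HQm.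
  + by move=> y /mem_take; rewrite mem_enum inE => /and3P [_ _ /eqP].
- have HS : forall v, v \in W -> #|[set y in W | (y != v) && (c [set v; y] == i)]| < d.
    by move=> v Hv; move: (Hnone v); rewrite Hv /= => /negbT; rewrite -ltnNge.
  have Hk1 : k = k.-1.+1 by rewrite /k /kk.
  have Hkd2 : k.-1 * d <= n.
    apply: leq_trans Hkd; rewrite mulnC; apply: leq_mul => //; lia.
  have Hm : k.-1 * d < #|W| by rewrite HW; lia.
  have [Qs [Hsz HU Hsub Hcl]] := greedy HS Hm.
  set R := [set x in W | x \notin Qs].
  have HR1 : #|W| <= #|R| + k.
    rewrite -(cardsID R W).
    have -> : W :&: R = R by apply/setIidPr/subsetP => x; rewrite inE => /andP [].
    rewrite leq_add2l Hk1 -Hsz.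
    apply: leq_trans (card_size Qs); apply: subset_leq_card; apply/subsetP => x.
    by rewrite !inE; case: (x \in Q); case: (x \in Qs).
  have Hkd3 : 2 * d + 2 * k <= 3 * n.
    have : d * 2 <= n by apply: leq_trans Hkd; rewrite leq_mul2l; lia.
    lia.
  have /card_gt0P [v0 Hv0] : 0 < #|R| by rewrite HW in HR1; lia.
  have HSR : #|[set y in R | (y != v0) && (c [set v0; y] == i)]| < d.
    apply: leq_ltn_trans (HS v0 _); last by move: Hv0; rewrite inE => /andP [].
    by apply: subset_leq_card; apply/subsetP => y; rewrite !inE => /andP [/andP [-> _] ->].
  have Hs := split_card Hv0 HSR.
  set Nb := [set y in R | (y != v0) && (c [set v0; y] != i)] in Hs.
  have HLs : size (take d (enum Nb)) = d.
    by rewrite size_takel // -cardE; rewrite HW in HR1; lia.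
  have Hsz' : size Qs = k by rewrite Hsz /k /kk.
  apply: (embed (i := oth i) (v0 := v0) Hsz' HLs) => //.
  + rewrite cat_uniq HU /= take_uniq ?enum_uniq // andbT.
    apply/andP; split.
    * rewrite negb_or; apply/andP; split.
      - by move: Hv0; rewrite inE => /andP [].
      - apply/hasPn => y /mem_take; rewrite mem_enum inE => /andP [Hy _].
        by move: Hy; rewrite inE => /andP [].
    * by apply/negP => /mem_take; rewrite mem_enum inE eqxx /= andbF.
  + lia.
  + move=> x y Hx Hy Hxy; apply: I2 (Hcl x y Hx Hy Hxy) (oth_neq i).
  + move=> y /mem_take; rewrite mem_enum inE => /and3P [_ _ H].
    exact: I2 H (oth_neq i).
Qed.

Definition sameb N (g : 'I_N -> nat) (S : {set 'I_N}) :=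
  [exists x in S, exists y in S, (x != y) && (g x == g y)].

Definition col3 N t d : edge_colouring 3 N :=
  [ffun S => if sameb (fun x : 'I_N => x %/ d) S then @Ordinal 3 2 isT
             else if sameb (fun x : 'I_N => x %/ d %/ t) S then @Ordinal 3 1 isT
             else @Ordinal 3 0 isT].

Lemma sameb2 N (g : 'I_N -> nat) x y : x != y -> sameb g [set x; y] = (g x == g y).
Proof.
move=> Hxy; apply/idP/idP.
- case/existsP => x' /andP [/set2P Hx' /existsP [y' /andP [/set2P Hy' /andP [Hne /eqP He]]]].
  case: Hx' Hy' Hne He => -> [] -> //; rewrite ?eqxx // => _ ->; by rewrite eqxx.
- move=> He; apply/existsP; exists x; rewrite set21 /=.
  by apply/existsP; exists y; rewrite set22 Hxy He.
Qed.

Lemma pig (s : seq nat) a m : uniq s -> (forall x, x \in s -> a <= x < a + m) -> size s <= m.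
Proof.
move=> Us H; rewrite -(size_iota a m); apply: uniq_leq_size => // x Hx.
by rewrite mem_iota; apply: H.
Qed.

Lemma block x q d : 0 < d -> x %/ d = q -> q * d <= x < q * d + d.
Proof.
move=> Hd <-; have := divn_eq x d; have := ltn_pmod x Hd; lia.
Qed.

Lemma arith n : 9 <= n ->
  let t := trunc_log 9 n in let d := dd n in
  [/\ 1 <= t, 1 <= d, kk n + d + 1 <= n, d * (2 * t.+1) <= n & 9 * t <= n].
Proof.
move=> Hn t d.
have Ht : 1 <= t by apply: trunc_log_max => //; rewrite expn1.
have H9 : 9 ^ t <= n by apply: trunc_logP => //; lia.
have H9t : 9 * t <= 9 ^ t.
  have -> : t = t.-1.+1 by lia.
  rewrite expnS leq_mul2l /=; exact: ltn_expl.
have Hdk : d * (2 * t.+1) <= n by rewrite /d /dd leq_divM.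
have Hd : 1 <= d by rewrite /d /dd leq_divRL /kk -/t; lia.
split => //; first (rewrite /kk -/t; nia).
lia.
Qed.

Lemma col3_val N t d (x y : 'I_N) : x != y ->
  val (col3 N t d [set x; y]) =
  (if x %/ d == y %/ d then 2 else if x %/ d %/ t == y %/ d %/ t then 1 else 0).
Proof. by move=> Hxy; rewrite ffunE !sameb2 //; case: (x %/ d == y %/ d); case: (x %/ d %/ t == y %/ d %/ t). Qed.

Lemma clique_pig k (g : 'I_k -> nat) a m :
  (forall u v, u != v -> g u != g v) -> (forall u, a <= g u < a + m) -> k <= m.
Proof.
move=> Hg Hb; rewrite -[k]size_enum_ord -(size_map g).
apply: (pig (a := a)).
  rewrite map_inj_uniq ?enum_uniq // => u v E; apply/eqP; apply/negPn/negP => Huv.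
  by move: (Hg u v Huv); rewrite E eqxx.
by move=> x /mapP [u _ ->].
Qed.

Lemma no_mono n N : 9 <= n -> N <= trunc_log 9 n * trunc_log 9 n * dd n ->
  ~~ has_mono_copy (@Grel n) (col3 N (trunc_log 9 n) (dd n)).
Proof.
move=> Hn HN; have [Ht Hd Hkdn _ _] := arith Hn.
move: HN Ht Hkdn; rewrite /kk; set t := trunc_log 9 n; set d := dd n => HN Ht Hkdn.
apply/negP => /existsP [f /andP [/injectiveP finj /existsP [i /forallP H]]].
have HG : forall u v, @Grel n u v -> val (col3 N t d [set f u; f v]) = val i.
  by move=> u v Huv; move: (H u) => /forallP /(_ v) /implyP /(_ Huv) /eqP ->.
have fb : forall u, val (f u) < t * t * d := fun u => leq_trans (ltn_ord _) HN.
have fneq : forall u v, u != v -> f u != f v.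
  by move=> u v; apply: contra => /eqP /finj ->.
have Hkn : t.+1 <= n by lia.
pose cl := fun u : 'I_t.+1 => widen_ord Hkn u.
have Gcl : forall u v : 'I_t.+1, u != v -> @Grel n (cl u) (cl v).
  move=> u v Huv; rewrite /Grel /kk -/t /= !ltn_ord andbT.
  rewrite orTb andbT.
  by apply: contra Huv => /eqP /(congr1 val) /= /val_inj ->.
have Hcol : forall u v : 'I_t.+1, u != v ->
   (if f (cl u) %/ d == f (cl v) %/ d then 2 else
    if f (cl u) %/ d %/ t == f (cl v) %/ d %/ t then 1 else 0) = val i.
  move=> u v Huv; rewrite -col3_val; first by apply: HG; apply: Gcl.
  by apply: fneq; apply: contra Huv => /eqP /(congr1 val) /= /val_inj ->.
have Hi3 : val i < 3 := ltn_ord i.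
have : (val i = 0) \/ (val i = 1) \/ (val i = 2) by lia.
case=> [Hi | [Hi | Hi]].
-
  suff : t.+1 <= t by lia.
  apply: (@clique_pig t.+1 (fun u => f (cl u) %/ d %/ t) 0 t).
  + move=> u v Huv; have := Hcol u v Huv; rewrite Hi.
    by case: ifP => //; case: ifP.
  + move=> u /=; have := fb (cl u); have Ht0 : 0 < t by lia.
    have Hd0 : 0 < d by lia.
    by rewrite ltn_divLR // ltn_divLR.
-
  pose a := f (cl ord0) %/ d %/ t.
  suff : t.+1 <= t by lia.
  apply: (@clique_pig t.+1 (fun u => f (cl u) %/ d) (a * t) t).
  + move=> u v Huv; have := Hcol u v Huv; rewrite Hi.
    by case: ifP => //; case: ifP.
  + move=> u /=; apply: block; first lia.
    case: (eqVneq u ord0) => [-> // | Hu].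
    have := Hcol u ord0 Hu; rewrite Hi /a.
    by case: ifP => //; case: ifP => // /eqP.
-
  have Hh : forall u : 'I_d.+1, t.+1 + u < n by move=> u; have := ltn_ord u; lia.
  pose h := fun u : 'I_d.+1 => Ordinal (Hh u).
  pose q := f (h ord0) %/ d.
  suff : d.+1 <= d by lia.
  apply: (@clique_pig d.+1 (fun u => val (f (h u))) (q * d) d).
  + move=> u v Huv; apply: fneq; apply: contra Huv => /eqP /(congr1 val) /= E.
    by apply/eqP; apply: ord_inj; lia.
  + move=> u /=; apply: block; first lia.
    case: (eqVneq u ord0) => [-> // | Hu].
    have Hne : h ord0 != h u.
      by apply: contra Hu => /eqP /(congr1 val) /= E; apply/eqP; apply: ord_inj => /=; move: E => /=; lia.
    have HGu : @Grel n (h ord0) (h u).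
      rewrite /Grel Hne /kk -/t /=; apply/or3P; apply: Or32; apply/andP; split.
      * by rewrite addn0.
      * have := ltn_ord u; have : (u : nat) != 0 by apply: contra Hu => /eqP E; apply/eqP; apply: ord_inj.
        move=> A B; apply/andP; split; lia.
    have := HG _ _ HGu; rewrite col3_val ?fneq // Hi /q.
    by case: ifP => [/eqP -> //|]; case: ifP.
Qed.

Lemma exists3_aux n N : 0 < n -> 4 ^ (\sum_(i < 3) n.-1) <= N -> ramsey_prop (@Grel n) 3 N.
Proof.
move=> n0 HN; apply/forallP => c.
have HR : 4 ^ (\sum_(i < 3) n.-1) <= #|[set: 'I_N]| by rewrite cardsT card_ord.
have [i [Q [_ HQc HQm]]] := @ramsey 3 _ c _ (fun _ => n.-1) setT (leqnn _) HR.
have /card_gt0P [v _] : 0 < #|Q| by rewrite HQc.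
have Hs : size (enum Q) = n by rewrite -cardE HQc /= prednK.
apply: (mono_from_seq (x0 := v) (i := i) (enum_uniq Q)); first by rewrite Hs.
move=> u w /andP [Huw _].
apply: HQm.
- by rewrite -mem_enum mem_nth // Hs.
- by rewrite -mem_enum mem_nth // Hs.
- by rewrite nth_uniq ?Hs ?enum_uniq.
Qed.

Lemma exists3 n : 0 < n -> exists N, ramsey_prop (@Grel n) 3 N.
Proof. by move=> n0; exists (4 ^ (\sum_(i < 3) n.-1)); apply: exists3_aux. Qed.

Lemma final_arith n t d L m : 1 <= t -> 1 <= d -> L <= 4 * t + 3 ->
  t * t * d + 1 <= m -> n < d * (2 * t.+1) + 2 * t.+1 -> n * L <= 64 * m.
Proof.
move=> Ht Hd HL Hm Hn.
have H1 : n * L <= n * (4 * t + 3) by apply: leq_mul.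
have H2 : n * (4 * t + 3) <= (d * (2 * t.+1) + 2 * t.+1) * (4 * t + 3) by apply: leq_mul; lia.
have T1 : t <= t * t by rewrite leq_pmulr.
have T2 : t * t <= t * t * d by rewrite leq_pmulr.
have H3 : (d * (2 * t.+1) + 2 * t.+1) * (4 * t + 3) <= 64 * (t * t * d + 1).
  have -> : (d * (2 * t.+1) + 2 * t.+1) * (4 * t + 3) = 8 * (t * t * d) + 14 * (t * d) + 6 * d + 8 * (t * t) + 14 * t + 6.
    rewrite !mulnDr !mulnDl !mulnA; lia.
  have T3 : t * d <= t * t * d by rewrite leq_mul2r leq_pmulr ?orbT.
  have T4 : d <= t * d by rewrite leq_pmull.
  lia.
lia.
Qed.

Theorem theorem1p3 :
  exists G : forall n : nat, rel 'I_n,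
    (forall n, simple_graph (G n)) /\
    (exists C n0 : nat, forall n, n0 <= n -> ramsey_number 2 (G n) <= C * n) /\
    (exists c n0 : nat, 0 < c /\
       forall n, n0 <= n -> n * trunc_log 2 n <= c * ramsey_number 3 (G n)).
Proof.
exists (fun n => @Grel n); split; first exact: Grel_simple.
split.
  exists 3, 1 => n Hn; rewrite /ramsey_number.
  case: excluded_middle_informative => [h | _] //.
  by case: ex_minnP => m _ Hmin; apply: Hmin; apply: upper.
exists 64, 9; split => // n Hn.
have [Ht Hd Hkdn Hdk H9t] := arith Hn.
rewrite /ramsey_number; case: excluded_middle_informative => [h | nh]; last first.
  by exfalso; apply: nh; apply: exists3; lia.
case: ex_minnP => m Hm _.
set t := trunc_log 9 n in Ht Hdk H9t *; set d := dd n in Hd Hkdn Hdk *.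
have Hm' : t * t * d + 1 <= m.
  rewrite addn1 ltnNge; apply/negP => Hle; move: Hm; apply/negP.
  rewrite /ramsey_prop negb_forall; apply/existsP; exists (col3 m t d).
  exact: no_mono.
have HL : trunc_log 2 n <= 4 * t + 3.
  have A : 2 ^ trunc_log 2 n <= n by apply: trunc_logP => //; lia.
  have B : n < 9 ^ t.+1 by apply: trunc_log_ltn.
  have C : 9 ^ t.+1 <= 2 ^ (4 * t.+1) by rewrite expnM leq_exp2r.
  have : 2 ^ trunc_log 2 n < 2 ^ (4 * t.+1) by lia.
  rewrite ltn_exp2l //; lia.
have Hn' : n < d * (2 * t.+1) + 2 * t.+1.
  have := divn_eq n (2 * t.+1); have := ltn_pmod n (isT : 0 < 2 * t.+1).
  rewrite /d /dd /kk -/t; lia.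
exact: final_arith Ht Hd HL Hm' Hn'.
Qed.
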